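(* Let $p\ge5$ be a prime and let $\alpha=\frac{P+\sqrt D}{Q}\in\mathbb{Q}_p$, where $P,Q\in\mathbb{Z}$, $Q\ne0$, $D$ is a non-square integer with $\sqrt D\in\mathbb{Q}_p$, and $Q\mid D-P^2$. Let $N=\lceil\log_2 p\rceil$. Define sequences by $P_0=P$, $Q_0=Q$, $\alpha_n=\frac{P_n+\sqrt D}{Q_n}$, $b_n=\bar s(\alpha_n)$ if $N\mid n$ and $b_n=\bar t(\alpha_n)$ otherwise (i.e. $b_{Nk}=\bar s(\alpha_{Nk})$ and $b_{Nk+j}=\bar t(\alpha_{Nk+j})$ for $1\le j\le N-1$), and $P_{n+1}=b_nQ_n-P_n$, $Q_{n+1}=\frac{D-P_{n+1}^2}{Q_n}$ (so that $\alpha_{n+1}=\frac{1}{\alpha_n-b_n}$), and assume all $b_n$ are nonzero. Let $M=\max\left\{|Q|,\ \frac{p^2}{4}|D|+1,\ \frac{4(p^2+1)}{3}\right\}$. Then $|Q_n|\le\frac{p^2}{4}M+1$ for all $n\ge0$.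
   Context: Let $\mathcal{R}=\{-\frac{p-1}{2},\dots,0,\dots,\frac{p-1}{2}\}$. Every nonzero $\beta\in\mathbb{Q}_p$ is written uniquely as $\beta=\sum_{n\ge r}a_np^n$ with $r=v_p(\beta)$, $a_n\in\mathcal{R}$, $a_r\ne0$. Put $s(\beta)=\sum_{n=r}^{0}a_np^n$, $t(\beta)=\sum_{n=r}^{-1}a_np^n$ (empty sums are $0$). With $\operatorname{round}(x)$ the integer nearest to the real $x$, for $\beta=\frac{P'+\sqrt D}{Q'}$ ($P',Q'\in\mathbb{Q}$, $Q'\ne0$) define $\bar s(\beta)=\operatorname{round}\!\left(\frac{P'/Q'-s(\beta)}{p}\right)p+s(\beta)$ and $\bar t(\beta)=\operatorname{round}\!\left(P'/Q'-t(\beta)\right)+t(\beta)$. Absolute values $|\cdot|$ are the usual real ones. *)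

(* Defs.v *)
From HB Require Import structures.
From mathcomp Require Import all_boot all_order all_algebra.
Set Implicit Arguments. Unset Strict Implicit. Unset Printing Implicit Defensive.
Import Order.TTheory GRing.Theory Num.Theory.
Local Open Scope ring_scope.

(* Everything is rational-valued; |.| on rat is the usual real absolute value. *)

(* q ∈ p^m Z_(p) for a rational q and an integer m. *)
Definition inpZ (p : nat) (m : int) (q : rat) : bool :=
  ~~ (p%:Z %| denq (q / (p%:Q ^ m)))%Z.

(* A p-adic integer zeta ∈ Z_p, given by a coherent sequence of integer
   approximations z k (zeta ≡ z k mod p^k), is a square root of D. *)
Definition padic_sqrt (p : nat) (D : int) (z : nat -> int) : Prop :=
  (forall k : nat, (z k.+1 == z k %[mod (p ^ k)%:Z])%Z) /\
  (forall k : nat, ((z k) ^+ 2 == D %[mod (p ^ k)%:Z])%Z).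

(* x + y * zeta ∈ p^m Z_p  (x, y rational; zeta given by z). *)
Definition inpZp (p : nat) (z : nat -> int) (x y : rat) (m : int) : Prop :=
  exists K : nat, forall k : nat, (K <= k)%N -> inpZ p m (x + y * (z k)%:~R).

Definition zsum (lo hi : int) (f : int -> rat) : rat :=
  if lo <= hi then \sum_(i < absz (hi - lo + 1)) f (lo + (i : nat)%:Z) else 0.

(* a (from index r on) is the balanced p-adic expansion of
   beta = (P' + zeta)/Q', with r = v_p(beta), a r <> 0, digits in R. *)
Definition padic_expansion (p : nat) (z : nat -> int) (P' Q' : rat)
    (a : int -> int) (r : int) : Prop :=
  a r != 0 /\
  (forall n : int, r <= n -> (absz (a n) <= (p.-1)./2)%N) /\
  (forall N : int,
     inpZp p z (P' / Q' - zsum r N (fun n => (a n)%:~R * p%:Q ^ n)) Q'^-1 (N + 1)).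

Definition s_of (p : nat) (z : nat -> int) (P' Q' s : rat) : Prop :=
  exists a r, padic_expansion p z P' Q' a r /\
              s = zsum r 0 (fun n => (a n)%:~R * p%:Q ^ n).
Definition t_of (p : nat) (z : nat -> int) (P' Q' t : rat) : Prop :=
  exists a r, padic_expansion p z P' Q' a r /\
              t = zsum r (-1) (fun n => (a n)%:~R * p%:Q ^ n).

Definition nearest (x : rat) (k : int) : Prop := `|x - k%:~R| <= 1 / 2.

Definition sbar_of (p : nat) (z : nat -> int) (P' Q' b : rat) : Prop :=
  exists s k, s_of p z P' Q' s /\ nearest ((P' / Q' - s) / p%:Q) k /\
              b = k%:~R * p%:Q + s.
Definition tbar_of (p : nat) (z : nat -> int) (P' Q' b : rat) : Prop :=
  exists t k, t_of p z P' Q' t /\ nearest (P' / Q' - t) k /\ b = k%:~R + t.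

(* Main.v *)
Require Import Defs.
From HB Require Import structures.
From mathcomp Require Import all_boot all_order all_algebra.
From mathcomp Require Import zify ring lra.
Import Order.TTheory GRing.Theory Num.Theory.
Local Open Scope ring_scope.

Definition zp (p : nat) (q : rat) : Prop :=
  exists a c : int, ~~ (p%:Z %| c)%Z /\ q = a%:~R / c%:~R.

Section ZP.
Variable p : nat.
Hypothesis hp : prime p.

Lemma ndvd_c0 {c : int} : ~~ (p%:Z %| c)%Z -> c != 0.
Proof. by apply: contra => /eqP ->; rewrite dvdz0. Qed.

Lemma ndvdM (c c' : int) : ~~ (p%:Z %| c)%Z -> ~~ (p%:Z %| c')%Z ->
  ~~ (p%:Z %| c * c')%Z.
Proof. rewrite !dvdzE abszM Euclid_dvdM //= => h1 h2; by rewrite negb_or h1 h2. Qed.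

Lemma zp_int (q : rat) : q \is a Num.int -> zp p q.
Proof.
move/intrP=> [a ->]; exists a, 1; split; last by rewrite divr1.
rewrite dvdzE /= dvdn1; apply/eqP => h; move: (prime_gt1 hp); by rewrite h.
Qed.

Lemma zpD x y : zp p x -> zp p y -> zp p (x + y).
Proof.
move=> [a [c [hc ->]]] [a' [c' [hc' ->]]].
exists (a * c' + a' * c), (c * c'); split; first exact: ndvdM.
have h1 := ndvd_c0 hc; have h2 := ndvd_c0 hc'.
rewrite !rmorphD !rmorphM /=. field.
by rewrite !intr_eq0 h1 h2.
Qed.

Lemma zpM x y : zp p x -> zp p y -> zp p (x * y).
Proof.
move=> [a [c [hc ->]]] [a' [c' [hc' ->]]].
exists (a * a'), (c * c'); split; first exact: ndvdM.
have h1 := ndvd_c0 hc; have h2 := ndvd_c0 hc'.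
rewrite !rmorphM /=. field.
by rewrite !intr_eq0 h1 h2.
Qed.

Lemma zpN x : zp p x -> zp p (- x).
Proof.
move=> hx; have -> : - x = (-1) * x by rewrite mulN1r.
apply: zpM => //; apply: zp_int; by rewrite rpredN rpred1.
Qed.

Lemma zp_inpZ0 q : inpZ p 0 q -> zp p q.
Proof.
rewrite /inpZ expr0z divr1 => h.
exists (numq q), (denq q); split => //; by rewrite divq_num_den.
Qed.

Lemma zp_inpZ1 q : inpZ p 1 q -> zp p q.
Proof.
rewrite /inpZ expr1z => h.
have : zp p (q / p%:Q).
  exists (numq (q / p%:Q)), (denq (q / p%:Q)); split => //; by rewrite divq_num_den.
move=> h2; have -> : q = (q / p%:Q) * p%:Q.
  rewrite divfK // intr_eq0; apply/eqP => -[h0]; move: (prime_gt1 hp); by rewrite h0.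
apply: zpM => //; apply: zp_int; exact: rpred_int.
Qed.

Lemma zp_intP q (m : nat) : zp p q -> (q * p%:Q ^+ m) \is a Num.int ->
  q \is a Num.int.
Proof.
move=> [a [c [hc ->]]] /intrP [j hj].
have c0 := ndvd_c0 hc.
have e : (a * p%:Z ^+ m) = j * c.
  apply: (@intr_inj rat); rewrite !rmorphM /= -hj rmorphXn /=.
  field; by rewrite intr_eq0.
have hcop : coprimez c (p%:Z ^+ m).
  apply: coprimezXr; rewrite coprimezE /= coprime_sym prime_coprime //.
have : (c %| a)%Z.
  rewrite -(Gauss_dvdzl _ hcop) e; exact: dvdz_mull.
move=> h; apply: (@Qint_dvdz a c h).
Qed.

End ZP.
Arguments ndvd_c0 {p c}.
Arguments ndvdM {p} hp {c c'}.
Arguments zp_int {p} hp {q}.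
Arguments zpD {p} hp {x y}.
Arguments zpM {p} hp {x y}.
Arguments zpN {p} hp {x}.
Arguments zp_inpZ0 {p q}.
Arguments zp_inpZ1 {p} hp {q}.
Arguments zp_intP {p} hp {q} m.

Lemma frac_eq (a c a' c' : int) : c != 0 -> c' != 0 -> a * c' = a' * c ->
  (a%:~R / c%:~R : rat) = a'%:~R / c'%:~R.
Proof.
move=> h1 h2 e.
have e' : (a%:~R * c'%:~R : rat) = a'%:~R * c%:~R by rewrite -!rmorphM /= e.
apply/eqP; rewrite eqr_div ?intr_eq0 //; exact/eqP.
Qed.

Section ZP2.
Variable p : nat.
Hypothesis hp : prime p.

Lemma p_neq0 : p%:Q != 0.
Proof. rewrite intr_eq0 /=; apply/eqP => -[h]; move: (prime_gt1 hp); by rewrite h. Qed.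

Lemma p_ge0 : 0 <= p%:Q.
Proof. by rewrite ler0z. Qed.

Lemma zsum_pint (a : int -> int) r N : exists m : nat,
  (zsum r N (fun n => (a n)%:~R * p%:Q ^ n) * p%:Q ^+ m) \is a Num.int.
Proof.
exists (absz r); rewrite /zsum; case: ifP => _; last by rewrite mul0r rpred0.
rewrite mulr_suml; apply: rpred_sum => i _; rewrite -mulrA; apply: rpredM.
  exact: rpred_int.
have h : 0 <= r + (i : nat)%:Z + (absz r)%:Z by lia.
change (p%:Q ^+ absz r) with (p%:Q ^ (absz r)%:Z).
rewrite -expfzDr ?p_neq0 // -(gez0_abs h).
change (p%:Q ^ (absz (r + (i : nat)%:Z + (absz r)%:Z))%:Z) with
  (p%:Q ^+ (absz (r + (i : nat)%:Z + (absz r)%:Z))).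
by rewrite rpredX // rpred_int.
Qed.

Lemma zp_divn (u : int) (n k : nat) : (0 < n)%N -> (logn p n <= k)%N ->
  ((p ^ k)%:Z %| u)%Z -> zp p (u%:~R / n%:Z%:~R).
Proof.
move=> n0 hk /dvdzP [w ->].
have [m1 hc hn] := pfactor_coprime hp n0.
set e := logn p n in hk hn.
exists (w * (p ^ (k - e))%:Z), m1%:Z; split.
  rewrite dvdzE /=; by rewrite -prime_coprime.
have m10 : m1 != 0%N by apply: contraTneq hc => ->; rewrite /coprime gcdn0; move: (prime_gt1 hp); case: (p) => [|[|]].
apply: frac_eq.
- by rewrite -lt0n.
- by [].
rewrite hn -{1}(subnK hk) expnD !PoszM; ring.
Qed.

Lemma zp_divQ (u Q : int) (k : nat) : Q != 0 -> (logn p `|Q| <= k)%N ->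
  ((p ^ k)%:Z %| u)%Z -> zp p (u%:~R / Q%:~R).
Proof.
move=> Q0 hk hu.
have h : zp p (u%:~R / (`|Q|%:Z)%:~R) by apply: (@zp_divn u `|Q| k) => //; rewrite absz_gt0.
case: (ltrgt0P Q) => hQ.
- by rewrite (gtz0_abs hQ) in h.
- have -> : Q = - (absz Q)%:Z by rewrite ltz0_abs // opprK.
  rewrite rmorphN /= invrN mulrN; exact: zpN.
- by move: Q0; rewrite hQ eqxx.
Qed.

End ZP2.
Arguments p_neq0 {p} hp.
Arguments zsum_pint {p} hp a r N.
Arguments zp_divn {p} hp {u n k}.
Arguments zp_divQ {p} hp {u Q k}.

Section Steps.
Variable p : nat.
Hypothesis hp : prime p.
Variable z : nat -> int.

Definition bprops (c : rat) (P' Q' b : rat) : Prop :=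
  (exists m : nat, (b * p%:Q ^+ m) \is a Num.int) /\
  `|b - P' / Q'| <= c /\
  (exists K : nat, forall k : nat, (K <= k)%N ->
     zp p (P' / Q' - b + Q'^-1 * (z k)%:~R)).

Lemma sbar_props P' Q' b : sbar_of p z P' Q' b -> bprops (p%:Q / 2) P' Q' b.
Proof.
case=> s [k [[a [r [[ar [dig ex]] es]]] [hn hb]]].
have [m hm] := zsum_pint hp a r 0.
split.
  exists m; rewrite hb es mulrDl; apply: rpredD; last exact: hm.
  by rewrite !(rpredM, rpredX, rpred_int).
split.
  have pn := p_neq0 hp; have pg := p_ge0 p.
  move: hn; set x := P' / Q' => hn.
  have -> : b - x = - (p%:Q * ((x - s) / p%:Q - k%:~R)).
    rewrite hb; field; exact: pn.
  rewrite normrN normrM (ger0_norm pg).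
  move: hn; rewrite /nearest => hn.
  set X := `|_| in hn *.
  nra.
have [K hK] := ex 0.
exists K => j hj.
have := hK j hj; rewrite add0r -es => /(zp_inpZ1 hp) h.
have -> : P' / Q' - b + Q'^-1 * (z j)%:~R =
          (P' / Q' - s + Q'^-1 * (z j)%:~R) + (- (k%:~R * p%:Q)).
  rewrite hb; ring.
apply: (zpD hp h); apply: (zpN hp); apply: (zp_int hp).
by rewrite !(rpredM, rpred_int).
Qed.

Lemma tbar_props P' Q' b : tbar_of p z P' Q' b -> bprops (1 / 2) P' Q' b.
Proof.
case=> t [k [[a [r [[ar [dig ex]] et]]] [hn hb]]].
have [m hm] := zsum_pint hp a r (-1).
split.
  exists m; rewrite hb et mulrDl; apply: rpredD; last exact: hm.
  by rewrite !(rpredM, rpredX, rpred_int).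
split.
  have -> : b - P' / Q' = - (P' / Q' - t - k%:~R) by rewrite hb; ring.
  by rewrite normrN.
have [K hK] := ex (-1).
exists K => j hj.
have := hK j hj; rewrite addNr -et => /zp_inpZ0 h.
have -> : P' / Q' - b + Q'^-1 * (z j)%:~R =
          (P' / Q' - t + Q'^-1 * (z j)%:~R) + (- k%:~R).
  rewrite hb; ring.
apply: (zpD hp h); apply: (zpN hp); apply: (zp_int hp).
by rewrite rpred_int.
Qed.

Lemma step_int (D : int) (c : rat) (P Q : int) (b : rat) :
  padic_sqrt p D z -> (forall x : int, x ^+ 2 != D) ->
  Q != 0 -> (Q %| D - P ^+ 2)%Z -> bprops c P%:~R Q%:~R b ->
  exists P1 Q1 : int, b * Q%:~R - P%:~R = P1%:~R /\
    (D%:~R - (b * Q%:~R - P%:~R) ^+ 2) / Q%:~R = Q1%:~R /\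
    Q1 != 0 /\ (Q1 %| D - P1 ^+ 2)%Z.
Proof.
move=> [_ hz] hD Q0 hQ [[m hm] [_ [K hK]]].
have Qr0 : (Q%:~R : rat) != 0 by rewrite intr_eq0.
set k := (K + logn p `|Q|)%N.
set zk : rat := (z k)%:~R.
have hw := hK k (leq_addr _ _).
set w := _ + _ in hw.
have ebQ : b * Q%:~R = P%:~R + zk - Q%:~R * w.
  rewrite /w /zk; field; exact: Qr0.
have bQint : (b * Q%:~R) \is a Num.int.
  apply: (zp_intP hp m).
    rewrite ebQ; apply: (zpD hp); last apply: (zpN hp); last apply: (zpM hp) => //.
      apply: (zp_int hp); by rewrite rpredD ?rpred_int.
    exact: (zp_int hp (rpred_int _ _)).
  have -> : b * Q%:~R * p%:Q ^+ m = (b * p%:Q ^+ m) * Q%:~R by ring.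
  by rewrite rpredM ?rpred_int.
have [P1 eP1] : exists P1 : int, b * Q%:~R - P%:~R = P1%:~R.
  apply/intrP; by rewrite rpredB ?rpred_int.
set Q1r := (D%:~R - (b * Q%:~R - P%:~R) ^+ 2) / Q%:~R.
have hdiv : ((D - P ^+ 2)%:~R / Q%:~R : rat) \is a Num.int by apply: Qint_dvdz.
have Q1int : Q1r \is a Num.int.
  apply: (zp_intP hp (m + m)%N).
    have -> : Q1r = (- (z k ^+ 2 - D))%:~R / Q%:~R + w * (zk + P1%:~R).
      rewrite /Q1r /w -eP1 /zk; rewrite rmorphN rmorphB /= rmorphXn /=.
      field; exact: Qr0.
    apply: (zpD hp).
      rewrite rmorphN /= mulNr; apply: (zpN hp); apply: (zp_divQ hp Q0 (leq_addl _ _)).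
      rewrite -eqz_mod_dvd; exact: hz.
    apply: (zpM hp) => //; apply: (zp_int hp); by rewrite rpredD ?rpred_int.
  have -> : Q1r * p%:Q ^+ (m + m) =
     ((D - P ^+ 2)%:~R / Q%:~R) * p%:Q ^+ m * p%:Q ^+ m
     + 2%:R * P%:~R * (b * p%:Q ^+ m) * p%:Q ^+ m
     - (b * p%:Q ^+ m) ^+ 2 * Q%:~R.
    rewrite /Q1r exprD rmorphB /= rmorphXn /=; field; exact: Qr0.
  have pm : p%:Q ^+ m \is a Num.int by rewrite rpredX // rpred_int.
  apply: rpredB; first apply: rpredD.
  - by apply: rpredM => //; apply: rpredM.
  - apply: rpredM => //; apply: rpredM => //; by rewrite rpredM ?rpred_int ?rpred_nat.
  - by rewrite rpredM ?rpredX // rpred_int.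
have [Q1 eQ1] := intrP Q1int.
exists P1, Q1; split => //; split => //.
have eint : Q1 * Q = D - P1 ^+ 2.
  apply: (@intr_inj rat); rewrite rmorphM rmorphB /= rmorphXn /= -eQ1 -eP1 /Q1r.
  by rewrite divfK.
split.
  apply/eqP => h0; move: eint; rewrite h0 mul0r => /eqP; rewrite eq_sym subr_eq0.
  by move/eqP => h; move: (hD P1); rewrite h eqxx.
by apply/dvdzP; exists Q; rewrite -eint mulrC.
Qed.

End Steps.

Lemma sq25 (pp : rat) : 5 <= pp -> 25 <= pp ^+ 2.
Proof. move=> h; nra. Qed.

Definition BB (pp M : rat) := pp ^+ 2 / 4 * M + 1.
Definition VV (pp d M : rat) (j : nat) :=
  (BB pp M - 4 * d / 3) / 4 ^+ j + 4 * d / 3.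

Lemma s_step (pp d M x : rat) : 5 <= pp -> 0 <= d -> pp ^+ 2 / 4 * d + 1 <= M ->
  1 <= x -> x <= M -> d / x + pp ^+ 2 / 4 * x <= BB pp M.
Proof.
move=> hpp hd hM h1 h2.
have x0 : 0 < x by lra.
rewrite /BB -(ler_pM2r x0) mulrDl divfK ?gt_eqF //.
have hp2 : 25 <= pp ^+ 2 by exact: sq25.
have hdM : d <= M - 1.
  have HH1 : d <= pp ^+ 2 / 4 * d by rewrite -[X in X <= _]mul1r; apply: ler_wpM2r => //; lra.
  lra.
case: (lerP (M - 1) x) => hx.
- nra.
- have HH2 : M - 1 <= x * (M - x) by nra.
  nra.
Qed.

Lemma VV_S pp d M j : VV pp d M j.+1 = d + VV pp d M j / 4.
Proof. rewrite /VV exprS; field; by rewrite expf_neq0. Qed.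

Lemma VV0 pp d M : VV pp d M 0 = BB pp M.
Proof. rewrite /VV expr0 divr1; ring. Qed.

Lemma M_ge {pp d M : rat} : 0 <= d -> pp ^+ 2 / 4 * d + 1 <= M -> 1 <= M.
Proof.
move=> hd hM.
have HH : 0 <= pp ^+ 2 / 4 * d by apply: mulr_ge0 => //; apply: mulr_ge0; [exact: sqr_ge0| lra].
lra.
Qed.

Lemma BB_ge {pp d M : rat} : 5 <= pp -> 0 <= d -> pp ^+ 2 / 4 * d + 1 <= M ->
  4 * d / 3 <= BB pp M.
Proof.
move=> hpp hd hM.
have hp2 : 25 <= pp ^+ 2 by exact: sq25.
have HM1 := M_ge (pp:=pp) hd hM.
rewrite /BB. nra.
Qed.

Lemma M_le_BB (pp d M : rat) : 5 <= pp -> 0 <= d -> pp ^+ 2 / 4 * d + 1 <= M ->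
  M <= BB pp M.
Proof.
move=> hpp hd hM.
have HM1 := M_ge (pp:=pp) hd hM; have hp2 : 25 <= pp ^+ 2 by exact: sq25.
rewrite /BB; nra.
Qed.

Lemma VV_le (pp d M : rat) j : 5 <= pp -> 0 <= d -> pp ^+ 2 / 4 * d + 1 <= M ->
  VV pp d M j <= BB pp M.
Proof.
move=> hpp hd hM.
rewrite /VV.
have h4 : 1 <= (4 : rat) ^+ j by rewrite exprn_ege1.
have hB := BB_ge hpp hd hM.
have h0 : 0 <= BB pp M - 4 * d / 3 by lra.
have HH : (BB pp M - 4 * d / 3) / 4 ^+ j <= BB pp M - 4 * d / 3.
  rewrite ler_pdivrMr; last lra.
  nra.
lra.
Qed.

Lemma VV_last (pp d M : rat) N : 5 <= pp -> 0 <= d -> pp ^+ 2 / 4 * d + 1 <= M ->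
  (1 <= N)%N -> (pp + 1) ^+ 2 <= 4 ^+ N -> VV pp d M N.-1 <= M.
Proof.
move=> hpp hd hM hN h4.
have e : (4 : rat) ^+ N = 4 * 4 ^+ N.-1 by rewrite -exprS prednK.
rewrite e in h4.
rewrite /VV.
set F := (4 : rat) ^+ N.-1 in h4 *.
have F0 : 0 < F by rewrite exprn_gt0.
have hp2 : 25 <= pp ^+ 2 by exact: sq25.
have hMd : 4 * d / 3 <= M.
  have HH1 : 25 / 4 * d <= pp ^+ 2 / 4 * d by apply: ler_wpM2r => //; lra.
  lra.
suff HS : BB pp M - 4 * d / 3 <= F * (M - 4 * d / 3).
  have HH : (BB pp M - 4 * d / 3) / F <= M - 4 * d / 3.
    rewrite ler_pdivrMr //; nra.
  lra.
have HH2 : (pp + 1) ^+ 2 / 4 * (M - 4 * d / 3) <= F * (M - 4 * d / 3).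
  apply: ler_wpM2r; lra.
suff : BB pp M - 4 * d / 3 <= (pp + 1) ^+ 2 / 4 * (M - 4 * d / 3) by lra.
rewrite /BB.
have HH3 : (2 * pp + 1) * (pp ^+ 2 / 4 * d + 1) <= (2 * pp + 1) * M by apply: ler_wpM2l; lra.
have HH4 : 4 * ((pp + 1) ^+ 2 - 4) / 3 * d <= (2 * pp + 1) * (pp ^+ 2) / 4 * d.
  apply: ler_wpM2r => //. rewrite !expr2. nra.
rewrite !expr2 in HH3 HH4 *.
nra.
Qed.

Lemma qstep (D c P Q b : rat) : Q != 0 -> `|b - P / Q| <= c ->
  `|(D - (b * Q - P) ^+ 2) / Q| <= `|D| / `|Q| + c ^+ 2 * `|Q|.
Proof.
move=> Q0 hc.
set y := b - P / Q in hc.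
have -> : b * Q - P = Q * y by rewrite /y; field.
have q0 : 0 < `|Q| by rewrite normr_gt0.
have hy0 : 0 <= `|y| by [].
have h1 : `|D - (Q * y) ^+ 2| <= `|D| + c ^+ 2 * `|Q| ^+ 2.
  apply: (le_trans (ler_normB _ _)); rewrite lerD2l normrX normrM exprMn mulrC.
  apply: ler_wpM2r; first exact: sqr_ge0.
  rewrite -normrX ger0_norm ?sqr_ge0 //.
  have -> : y ^+ 2 = `|y| ^+ 2 by rewrite -normrX ger0_norm ?sqr_ge0.
  rewrite !expr2; nra.
rewrite normrM normrV ?unitfE // ler_pdivrMr //.
have -> : (`|D| / `|Q| + c ^+ 2 * `|Q|) * `|Q| = `|D| + c ^+ 2 * `|Q| ^+ 2.
  field; by rewrite gt_eqF.
exact: h1.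
Qed.

Theorem lemma6 (p : nat) (P Q D : int) (z : nat -> int)
    (Pn Qn bn : nat -> rat) :
  prime p -> (5 <= p)%N ->
  Q != 0 ->
  (forall x : int, x ^+ 2 != D) ->
  padic_sqrt p D z ->
  (Q %| D - P ^+ 2)%Z ->
  Pn 0%N = P%:~R -> Qn 0%N = Q%:~R ->
  (forall n : nat,
     (if (up_log 2 p %| n)%N then sbar_of p z (Pn n) (Qn n) (bn n)
      else tbar_of p z (Pn n) (Qn n) (bn n))) ->
  (forall n : nat, Pn n.+1 = bn n * Qn n - Pn n) ->
  (forall n : nat, Qn n.+1 = (D%:~R - Pn n.+1 ^+ 2) / Qn n) ->
  (forall n : nat, bn n != 0) ->
  let M := Num.max `|Q%:~R : rat|
             (Num.max ((p%:Q) ^+ 2 / 4 * `|D%:~R : rat| + 1)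
                      (4 * ((p%:Q) ^+ 2 + 1) / 3)) in
  forall n : nat, `|Qn n| <= (p%:Q) ^+ 2 / 4 * M + 1.
Proof.
move=> hp hp5 Q0 hD hz hQ e0P e0Q hb hP hQn hb0 M n.
set N := up_log 2 p.
have hp1 : (1 < p)%N := prime_gt1 hp.
have hpN : (p <= 2 ^ N)%N := up_logP p (isT : (1 < 2)%N).
have hN0 : (0 < N)%N by rewrite /N up_log_gt0 /=.
have hneq : (p != 2 ^ N)%N.
  apply/eqP => e.
  have h2 : (2 %| p)%N by rewrite e dvdn_exp.
  rewrite dvdn_prime2 // in h2; move/eqP: h2 => h2; by rewrite -h2 in hp5.
have hpN1 : (p.+1 <= 2 ^ N)%N by rewrite ltn_neqAle hneq hpN.
have hN2 : (2 <= N)%N.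
  rewrite leqNgt; apply/negP => h.
  have : (2 ^ N <= 2 ^ 1)%N by rewrite leq_exp2l.
  lia.
set pp : rat := p%:Q.
have ppE : pp = p%:R by rewrite /pp -pmulrn.
have hpp : 5 <= pp by rewrite ppE ler_nat.
have h4 : (pp + 1) ^+ 2 <= 4 ^+ N.
  have e4 : (4 : rat) ^+ N = ((2 ^ N)%N%:R) ^+ 2.
    by rewrite natrX exprAC (_ : (2%:R : rat) ^+ 2 = 4) // expr2 -natrM.
  rewrite e4.
  have : (pp + 1) <= (2 ^ N)%N%:R by rewrite ppE natr1 ler_nat.
  move=> h; have h0 : 0 <= pp + 1 by lra.
  nra.
set d : rat := `|D%:~R|.
have hd : 0 <= d by exact: normr_ge0.
have hM : pp ^+ 2 / 4 * d + 1 <= M.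
  by rewrite /M le_max le_max lexx orbT.
have hbp : forall k, bprops p z (if (N %| k)%N then pp / 2 else 1 / 2)
                        (Pn k) (Qn k) (bn k).
  move=> k; have := hb k; rewrite -/N; case: ifP => _.
  - exact: sbar_props.
  - exact: tbar_props.
have hI : forall k, exists Pi Qi : int, Pn k = Pi%:~R /\ Qn k = Qi%:~R /\
                     Qi != 0 /\ (Qi %| D - Pi ^+ 2)%Z.
  elim=> [|k [Pi [Qi [eP [eQ [Qi0 hdv]]]]]]; first by exists P, Q.
  have hbk := hbp k; rewrite eP eQ in hbk.
  have [P1 [Q1 [e1 [e2 [e3 e4]]]]] := @step_int p hp z _ _ _ _ _ hz hD Qi0 hdv hbk.
  exists P1, Q1; split; first by rewrite hP eP eQ.
  split => //; by rewrite hQn hP eP eQ.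
have hx1 : forall k, 1 <= `|Qn k|.
  move=> k; have [Pi [Qi [_ [eQ [Qi0 _]]]]] := hI k.
  rewrite eQ -intr_norm (_ : 1 = 1%:~R) // ler_int.
  by rewrite -normr_gt0 in Qi0.
have hstep : forall k, `|Qn k.+1| <=
    d / `|Qn k| + (if (N %| k)%N then pp / 2 else 1 / 2) ^+ 2 * `|Qn k|.
  move=> k; have [Pi [Qi [_ [eQ [Qi0 _]]]]] := hI k.
  have [_ [hc _]] := hbp k.
  rewrite hQn hP; apply: qstep => //; by rewrite eQ intr_eq0.
have hW : forall k, `|Qn k| <=
    (if (N %| k)%N then M else VV pp d M ((k %% N).-1)).
  elim=> [|k IH].
    by rewrite dvdn0 e0Q /M le_max lexx.
  have hs := hstep k; have h1 := hx1 k.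
  case: ifP IH hs => hk IH hs.
  - have hk1 : (N %| k.+1)%N = false.
      apply/negP => h; move: h; rewrite -addn1 dvdn_addr // dvdn1 => /eqP hN1.
      by rewrite hN1 in hN2.
    rewrite hk1 modnS hk1.
    move: hk; rewrite /dvdn => /eqP ->; rewrite /= VV0.
    apply: (le_trans hs).
    have -> : (pp / 2) ^+ 2 = pp ^+ 2 / 4 by field.
    exact: s_step.
  - have hj0 : (0 < k %% N)%N by rewrite lt0n; move: hk; rewrite /dvdn => ->.
    have hs' : `|Qn k.+1| <= VV pp d M (k %% N).
      rewrite -(prednK hj0) VV_S.
      apply: (le_trans hs).
      have hx0 : 0 < `|Qn k| by lra.
      have HH1 : d / `|Qn k| <= d.
        rewrite ler_pdivrMr //; nra.
      have HH2 : (1 / 2) ^+ 2 * `|Qn k| = `|Qn k| / 4 by field.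
      lra.
    case: ifP => hk1.
    + apply: (le_trans hs').
      have hlt := ltn_pmod k hN0.
      have ek : (k %% N = N.-1)%N.
        have := hk1; rewrite {1}(divn_eq k N) -addn1 -addnA dvdn_addr ?dvdn_mull //.
        have hpos : (0 < k %% N + 1)%N by rewrite addn1.
        move/(dvdn_leq hpos) => hle.
        lia.
      rewrite ek; exact: VV_last.
    + by rewrite modnS hk1 /=.
have := hW n; case: ifP => _ h.
- apply: (le_trans h); exact: (@M_le_BB pp d M hpp hd hM).
- apply: (le_trans h); exact: (@VV_le pp d M _ hpp hd hM).
Qed.
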